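(* For a right $R$-module $M$ the following are equivalent: (a) $M$ is endoregular; (b) $M$ is finite $\Sigma$-Rickart and $M\in\mathfrak{F}_M$; (c) $M^{(n)}$ satisfies the $D_2$ condition for every integer $n>0$, and for every $n>0$ every finitely $M$-generated submodule of $M^{(n)}$ is a direct summand of $M^{(n)}$.
   Context: Modules are unitary right $R$-modules. $M$ is endoregular if $\mathrm{End}_R(M)$ is von Neumann regular. $M$ is Rickart if $\ker\varphi$ is a direct summand of $M$ for all $\varphi\in\mathrm{End}_R(M)$; $M$ is finite $\Sigma$-Rickart if $M^{(n)}$ is Rickart for all $n>0$. A module $N$ is finitely $M$-generated if there is an epimorphism $M^{(n)}\to N$ for some $n>0$. $\mathfrak{F}_M$ is the class of right $R$-modules $A$ such that for every monomorphism $\alpha:N\to M$ with $N$ finitely $M$-generated and every homomorphism $\beta:N\to A$ there is $\gamma:M\to A$ with $\beta=\gamma\alpha$. A module $X$ satisfies the $D_2$ condition if for every submodule $Y\le X$ such that $X/Y$ is isomorphic to a direct summand of $X$, $Y$ is a direct summand of $X$. *)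

(* Defs.v *)
From HB Require Import structures.
From mathcomp Require Import all_boot all_order all_algebra.
Set Implicit Arguments. Unset Strict Implicit. Unset Printing Implicit Defensive.
Import GRing.Theory.
Local Open Scope ring_scope.

(* Generic module theory for LEFT modules over an arbitrary ring S.
   Right R-modules are left modules over the converse ring R^c
   (see the statement). *)
Section ModuleDefs.
Variable S : pzRingType.

Definition hom (U V : lmodType S) (f : U -> V) : Prop :=
  forall (a : S) (x y : U), f (a *: x + y) = a *: f x + f y.

Definition submod (V : lmodType S) (P : V -> Prop) : Prop :=
  P 0 /\ forall (a : S) (x y : V), P x -> P y -> P (a *: x + y).

Definition dsummand (V : lmodType S) (P : V -> Prop) : Prop :=
  submod P /\ exists Q : V -> Prop, submod Q /\
    (forall x, P x -> Q x -> x = 0) /\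
    (forall x, exists y z, P y /\ Q z /\ x = y + z).

Definition endoregular (M : lmodType S) : Prop :=
  forall f : M -> M, hom f -> exists g : M -> M, hom g /\ forall x, f (g (f x)) = f x.

Definition rickart (M : lmodType S) : Prop :=
  forall f : M -> M, hom f -> dsummand (fun x => f x = 0).

Definition dpow (M : lmodType S) (n : nat) : lmodType S := {ffun 'I_n -> M}.

Definition fin_sigma_rickart (M : lmodType S) : Prop :=
  forall n : nat, (0 < n)%N -> rickart (dpow M n).

Definition fin_gen (M N : lmodType S) : Prop :=
  exists n : nat, (0 < n)%N /\ exists f : dpow M n -> N, hom f /\ forall y, exists x, f x = y.

Definition inF (M A : lmodType S) : Prop :=
  forall (N : lmodType S) (al : N -> M) (be : N -> A),
    fin_gen M N -> hom al -> (forall x y, al x = al y -> x = y) -> hom be ->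
    exists ga : M -> A, hom ga /\ forall x, be x = ga (al x).

(* D2 condition. "X/Y is isomorphic to a direct summand of X" is expressed
   (first isomorphism theorem) as: there is an endomorphism g of X with
   kernel Y whose image is a direct summand of X. *)
Definition D2 (X : lmodType S) : Prop :=
  forall Y : X -> Prop, submod Y ->
    (exists g : X -> X, hom g /\ (forall x, g x = 0 <-> Y x) /\
        dsummand (fun x => exists y, x = g y)) ->
    dsummand Y.

Definition fin_gen_sub (M X : lmodType S) (P : X -> Prop) : Prop :=
  submod P /\ exists n : nat, (0 < n)%N /\
    exists f : dpow M n -> X, hom f /\ forall x, P x <-> exists y, x = f y.

End ModuleDefs.

(* Main.v *)
Require Import Defs.
From HB Require Import structures.
From mathcomp Require Import all_boot all_order all_algebra.
From Stdlib Require Import ClassicalDescription ClassicalEpsilon.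
Set Implicit Arguments. Unset Strict Implicit. Unset Printing Implicit Defensive.
Import GRing.Theory.
Local Open Scope ring_scope.

Section Gen.
Variable S : pzRingType.
Implicit Types U V W X : lmodType S.

Section HomLemmas.
Variables (U V : lmodType S) (f : U -> V) (hf : Defs.hom f).
Lemma homD x y : f (x + y) = f x + f y.
Proof. by have := hf 1 x y; rewrite !scale1r. Qed.
Lemma hom0 : f 0 = 0.
Proof. by have := homD 0 0; rewrite addr0 => /eqP; rewrite -subr_eq subrr eq_sym => /eqP. Qed.
Lemma homN x : f (- x) = - f x.
Proof. by apply/eqP; rewrite -addr_eq0 -homD addNr hom0. Qed.
Lemma homB x y : f (x - y) = f x - f y.
Proof. by rewrite homD homN. Qed.
Lemma homZ a x : f (a *: x) = a *: f x.
Proof. by have := hf a x 0; rewrite addr0 hom0 addr0. Qed.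
End HomLemmas.

Lemma hom_comp U V W (f : V -> W) (g : U -> V) : Defs.hom f -> Defs.hom g -> Defs.hom (f \o g).
Proof. by move=> hf hg a x y /=; rewrite hg hf. Qed.

Definition Reg U V := forall f : U -> V, Defs.hom f ->
  exists g : V -> U, Defs.hom g /\ forall x, f (g (f x)) = f x.

Record biprod U V X := BiProd {
  i1 : U -> X; i2 : V -> X; p1 : X -> U; p2 : X -> V;
  hi1 : Defs.hom i1; hi2 : Defs.hom i2; hp1 : Defs.hom p1; hp2 : Defs.hom p2;
  p1i1 : forall u, p1 (i1 u) = u; p2i2 : forall v, p2 (i2 v) = v;
  p1i2 : forall v, p1 (i2 v) = 0; p2i1 : forall u, p2 (i1 u) = 0;
  ip : forall x, i1 (p1 x) + i2 (p2 x) = x }.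


Lemma hom_id U : Defs.hom (fun x : U => x).
Proof. by []. Qed.
Lemma hom_add U V (f g : U -> V) : Defs.hom f -> Defs.hom g -> Defs.hom (fun x => f x + g x).
Proof.
move=> hf hg a x y; rewrite hf hg scalerDr -!addrA; congr (_ + _).
by rewrite addrCA.
Qed.
Lemma hom_sub U V (f g : U -> V) : Defs.hom f -> Defs.hom g -> Defs.hom (fun x => f x - g x).
Proof.
move=> hf hg a x y; rewrite hf hg scalerBr opprD -!addrA; congr (_ + _).
by rewrite addrCA.
Qed.
Lemma hom_compf U V W (f : V -> W) (g : U -> V) : Defs.hom f -> Defs.hom g -> Defs.hom (fun x => f (g x)).
Proof. by move=> hf hg a x y /=; rewrite hg hf. Qed.

Lemma hom_opp U V (f : U -> V) : Defs.hom f -> Defs.hom (fun x => - f x).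
Proof. by move=> hf a x y; rewrite hf opprD scalerN. Qed.

Ltac homt := repeat match goal with
 | |- Defs.hom (fun x => x) => apply hom_id
 | |- Defs.hom (fun x => _ - _) => apply hom_sub
 | |- Defs.hom (fun x => _ + _) => apply hom_add
 | |- Defs.hom (fun x => - _) => apply hom_opp
 | |- Defs.hom ?f => assumption
 | |- Defs.hom (fun x => ?f (@?g x)) => apply (@hom_compf _ _ _ f g)
 end.

Lemma RegA U V W X : Reg U W -> Reg V W -> biprod U V X -> Reg X W.
Proof.
move=> RU RV [i1 i2 p1 p2 hi1 hi2 hp1 hp2 p1i1 p2i2 p1i2 p2i1 ip] f hf.
have [g1 [hg1 e1]] := RU (fun u => f (i1 u)) ltac:(homt).
pose q w := f (i1 (g1 w)).
have hq : Defs.hom q by rewrite /q; homt.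
have [g2 [hg2 e2]] := RV (fun v => f (i2 v) - q (f (i2 v))) ltac:(homt).
exists (fun w => i1 (g1 (w - f (i2 (g2 (w - q w))))) + i2 (g2 (w - q w))).
split; first by homt.
move=> x.
have fx : f x = f (i1 (p1 x)) + f (i2 (p2 x)) by rewrite -homD // ip.
have qf1 u : q (f (i1 u)) = f (i1 u) by rewrite /q e1.
have pfx : f x - q (f x) = f (i2 (p2 x)) - q (f (i2 (p2 x))).
  by rewrite fx (homD hq) qf1 opprD addrACA subrr add0r.
rewrite pfx homD //.
set B := f (i2 (p2 x)).
set h := g2 (B - q B).
have e2' : f (i2 h) - q (f (i2 h)) = B - q B by rewrite /h e2.
change (q (f x - f (i2 h)) + f (i2 h) = f x).
rewrite (homB hq) fx (homD hq) qf1 -/B.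
set A := f (i1 (p1 x)).
rewrite -!addrA [- _ + f _]addrC e2' [q B + _]addrC subrK.
by [].
Qed.


Lemma RegB U V W X : Reg W U -> Reg W V -> biprod U V X -> Reg W X.
Proof.
move=> RU RV [i1 i2 p1 p2 hi1 hi2 hp1 hp2 p1i1 p2i2 p1i2 p2i1 ip] f hf.
have [g1 [hg1 e1]] := RU (fun w => p1 (f w)) ltac:(homt).
pose p w := w - g1 (p1 (f w)).
have hp : Defs.hom p by rewrite /p; homt.
have [g2 [hg2 e2]] := RV (fun w => p2 (f (p w))) ltac:(homt).
exists (fun x => g1 (p1 x) - p (g2 (p2 (f (g1 (p1 x))))) + p (g2 (p2 x))).
split; first by homt.
move=> w.
have hF1 : Defs.hom (fun w => p1 (f w)) by homt.
have hF2 : Defs.hom (fun w => p2 (f w)) by homt.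
have f1p y : p1 (f (p y)) = 0.
  by rewrite /p (homB hF1) e1 subrr.
set c := g1 (p1 (f w)).
have pw : p w = w - c by [].
have E : g1 (p1 (f w)) - p (g2 (p2 (f c))) + p (g2 (p2 (f w))) = c + p (g2 (p2 (f (p w)))).
  rewrite -/c -addrA -(homN hp) -(homD hp); congr (_ + p _).
  by rewrite addrC -(homB hg2) -(homB hF2) pw.
rewrite E.
rewrite -(ip (f (c + _))) -[in RHS](ip (f w)); congr (i1 _ + i2 _).
  by rewrite (homD hF1) f1p addr0 /c e1.
rewrite (homD hF2) e2 pw (homB hF2).
by rewrite addrC subrK.
Qed.


Section Dpow.
Variable M : lmodType S.

Definition di1 n (x : dpow M n) : dpow M n.+1 :=
  [ffun i : 'I_n.+1 => if unlift ord_max i is Some j then (x : {ffun 'I_n -> M}) j else (0 : M)].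
Definition di2 n (m : M) : dpow M n.+1 :=
  [ffun i : 'I_n.+1 => if i == ord_max then m else (0 : M)].
Definition dp1 n (y : dpow M n.+1) : dpow M n :=
  [ffun j : 'I_n => ((y : {ffun 'I_n.+1 -> M}) (lift ord_max j) : M)].
Definition dp2 n (y : dpow M n.+1) : M := (y : {ffun 'I_n.+1 -> M}) ord_max.

Lemma dpow_biprod n : biprod (dpow M n) M (dpow M n.+1).
Proof.
refine (@BiProd _ _ _ (@di1 n) (@di2 n) (@dp1 n) (@dp2 n) _ _ _ _ _ _ _ _ _).
- move=> a x y; apply/ffunP=> i; rewrite !ffunE.
  by case: (unlift _ i) => [j|]; rewrite ?ffunE ?scaler0 ?addr0.
- move=> a x y; apply/ffunP=> i; rewrite !ffunE.
  by case: (i == ord_max); rewrite ?scaler0 ?addr0.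
- by move=> a x y; apply/ffunP=> i; rewrite !ffunE.
- by move=> a x y; rewrite /dp2 !ffunE.
- by move=> x; apply/ffunP=> j; rewrite !ffunE liftK.
- by move=> m; rewrite /dp2 !ffunE eqxx.
- by move=> m; apply/ffunP=> j; rewrite !ffunE eq_sym (negbTE (neq_lift _ _)).
- by move=> x; rewrite /dp2 !ffunE unlift_none.
- move=> y; apply/ffunP=> i; rewrite !ffunE.
  case: unliftP => [j ->|->]; last by rewrite eqxx add0r.
  by rewrite ffunE eq_sym (negbTE (neq_lift _ _)) addr0.
Qed.

Lemma Reg_dpow0_l W : Reg (dpow M 0) W.
Proof.
move=> f hf; exists (fun _ => 0); split.
  by move=> a x y; rewrite scaler0 addr0.
move=> x; congr f; apply/ffunP=> -[] //.
Qed.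

Lemma Reg_dpow0_r W : Reg W (dpow M 0).
Proof.
move=> f hf; exists (fun _ => 0); split.
  by move=> a x y; rewrite scaler0 addr0.
move=> x; apply/ffunP=> -[] //.
Qed.

Lemma Reg_to_dpow W : Reg W W -> Reg W M -> forall n, Reg W (dpow M n).
Proof.
move=> _ RM; elim=> [|n IH]; first exact: Reg_dpow0_r.
exact: RegB IH RM (dpow_biprod n).
Qed.

Lemma Reg_from_dpow W : Reg M W -> forall n, Reg (dpow M n) W.
Proof.
move=> RM; elim=> [|n IH]; first exact: Reg_dpow0_l.
exact: RegA IH RM (dpow_biprod n).
Qed.

Lemma Reg_dpow : Reg M M -> forall k n, Reg (dpow M k) (dpow M n).
Proof.
move=> RM k n; apply: Reg_from_dpow.
by apply: Reg_to_dpow.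
Qed.

End Dpow.


Section SubMod.
Variables (X : lmodType S) (K : X -> Prop) (HK : submod K).

Lemma submodD x y : K x -> K y -> K (x + y).
Proof. by move=> kx ky; have := HK.2 1 x y kx ky; rewrite scale1r. Qed.
Lemma submodZ a x : K x -> K (a *: x).
Proof. by move=> kx; have := HK.2 a x 0 kx HK.1; rewrite addr0. Qed.
Lemma submodN x : K x -> K (- x).
Proof. by move=> kx; rewrite -scaleN1r; apply: submodZ. Qed.
Lemma submodB x y : K x -> K y -> K (x - y).
Proof. by move=> kx ky; apply: submodD => //; apply: submodN. Qed.

Definition Kb (x : X) : bool := if excluded_middle_informative (K x) then true else false.
Lemma KbP x : Kb x <-> K x.
Proof. by rewrite /Kb; case: excluded_middle_informative. Qed.

Definition subK := {x : X | Kb x}.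
HB.instance Definition _ := [isSub of subK for @sval X Kb].
HB.instance Definition _ := [Choice of subK by <:].
Definition sk0 : subK := exist _ 0 (proj2 (KbP 0) HK.1).
Definition skadd (x y : subK) : subK :=
  exist _ (val x + val y) (proj2 (KbP _) (submodD (proj1 (KbP _) (valP x)) (proj1 (KbP _) (valP y)))).
Definition skopp (x : subK) : subK :=
  exist _ (- val x) (proj2 (KbP _) (submodN (proj1 (KbP _) (valP x)))).
Definition skscale a (x : subK) : subK :=
  exist _ (a *: val x) (proj2 (KbP _) (submodZ a (proj1 (KbP _) (valP x)))).

Lemma skaddA : associative skadd.
Proof. by move=> x y z; apply: val_inj; rewrite /= addrA. Qed.
Lemma skaddC : commutative skadd.
Proof. by move=> x y; apply: val_inj; rewrite /= addrC. Qed.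
Lemma skadd0 : left_id sk0 skadd.
Proof. by move=> x; apply: val_inj; rewrite /= add0r. Qed.
Lemma skaddN : left_inverse sk0 skopp skadd.
Proof. by move=> x; apply: val_inj; rewrite /= addNr. Qed.

HB.instance Definition _ := GRing.isZmodule.Build subK skaddA skaddC skadd0 skaddN.

Lemma skscaleA a b v : skscale a (skscale b v) = skscale (a * b) v.
Proof. by apply: val_inj; rewrite /= scalerA. Qed.
Lemma skscale1 : left_id 1 skscale.
Proof. by move=> v; apply: val_inj; rewrite /= scale1r. Qed.
Lemma skscaleDr : right_distributive skscale +%R.
Proof. by move=> a u v; apply: val_inj; rewrite /= scalerDr. Qed.
Lemma skscaleDl v : {morph skscale^~ v: a b / a + b}.
Proof. by move=> a b; apply: val_inj; rewrite /= scalerDl. Qed.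

HB.instance Definition _ := GRing.Zmodule_isLmodule.Build S subK skscaleA skscale1 skscaleDr skscaleDl.

Lemma subK_exists : exists (N : lmodType S) (v : N -> X),
  Defs.hom v /\ (forall a b, v a = v b -> a = b) /\ (forall x, K x <-> exists n, x = v n).
Proof.
exists subK, val; split; first by [].
split; first exact: val_inj.
move=> x; split.
  by move=> kx; exists (exist _ x (proj2 (KbP _) kx)).
by move=> [n ->]; apply/KbP; apply: valP.
Qed.

End SubMod.

Lemma submod_ker U V (f : U -> V) : Defs.hom f -> submod (fun x => f x = 0).
Proof.
move=> hf; split; first exact: hom0.
by move=> a x y fx fy; rewrite hf fx fy scaler0 addr0.
Qed.

Lemma submod_im U V (f : U -> V) : Defs.hom f -> submod (fun y => exists x, y = f x).
Proof.
move=> hf; split; first by exists 0; rewrite (hom0 hf).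
by move=> a _ _ [x ->] [y ->]; exists (a *: x + y); rewrite hf.
Qed.

Lemma dsummand_ext V (P Q : V -> Prop) : (forall x, P x <-> Q x) -> dsummand P -> dsummand Q.
Proof.
move=> PQ [[P0 PD] [C [hC [dis sp]]]]; split.
  split; first by apply/PQ.
  by move=> a x y /PQ px /PQ py; apply/PQ; apply: PD.
exists C; split=> //; split.
  by move=> x /PQ px cx; apply: dis.
by move=> x; have [y [z [py [cz ->]]]] := sp x; exists y, z; split=> //; apply/PQ.
Qed.

Lemma reg_ker U V (f : U -> V) g : Defs.hom f -> Defs.hom g ->
  (forall x, f (g (f x)) = f x) -> dsummand (fun x => f x = 0).
Proof.
move=> hf hg e; split; first exact: submod_ker.
exists (fun x => exists y, x = g (f y)); split.
  apply: (submod_im (f := fun y => g (f y))); homt.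
split.
  by move=> x fx [y dx]; move: fx; rewrite dx e => fy; rewrite fy (hom0 hg).
move=> x; exists (x - g (f x)), (g (f x)); split; last split.
- by rewrite (homB hf) e subrr.
- by exists x.
- by rewrite subrK.
Qed.

Lemma reg_im U V (f : U -> V) g : Defs.hom f -> Defs.hom g ->
  (forall x, f (g (f x)) = f x) -> dsummand (fun y => exists x, y = f x).
Proof.
move=> hf hg e; split; first exact: submod_im.
exists (fun y => f (g y) = 0); split.
  apply: (submod_ker (f := fun y => f (g y))); homt.
split.
  by move=> y [x ->]; rewrite e.
move=> y; exists (f (g y)), (y - f (g y)); split; last split.
- by exists (g y).
- by rewrite (homB hg) (homB hf) e subrr.
- by rewrite addrC subrK.
Qed.

Lemma summands_reg U V (f : U -> V) : Defs.hom f ->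
  dsummand (fun x => f x = 0) -> dsummand (fun y => exists x, y = f x) ->
  exists g, Defs.hom g /\ forall x, f (g (f x)) = f x.
Proof.
move=> hf [hker [K [hK [dK sK]]]] [him [L [hL [dL sL]]]].
have EX y : exists k, K k /\ L (y - f k).
  have [a [b [[x ->] [Lb ->]]]] := sL y.
  have [x0 [k [fx0 [Kk ->]]]] := sK x.
  exists k; split=> //.
  by rewrite (homD hf) fx0 add0r addrAC subrr add0r.
have uniq y k k' : K k -> L (y - f k) -> K k' -> L (y - f k') -> k = k'.
  move=> Kk Lk Kk' Lk'.
  have Lkk : L (f k - f k').
    by have := submodB hL Lk' Lk; rewrite opprB addrC addrA subrK.
  have : f (k - k') = 0.
    by rewrite (homB hf); apply: dL Lkk; exists (k - k'); rewrite (homB hf).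
  move=> fkk; apply/eqP; rewrite -subr_eq0; apply/eqP.
  by apply: dK fkk (submodB hK Kk Kk').
pose g y := proj1_sig (constructive_indefinite_description _ (EX y)).
have gP y : K (g y) /\ L (y - f (g y)) by rewrite /g; case: constructive_indefinite_description.
exists g; split.
  move=> a x y; have [Kx Lx] := gP x; have [Ky Ly] := gP y.
  have [Kxy Lxy] := gP (a *: x + y).
  apply: (uniq (a *: x + y)) => //.
    by apply: (proj2 hK).
  have -> : a *: x + y - f (a *: g x + g y) = a *: (x - f (g x)) + (y - f (g y)).
    by rewrite hf scalerBr opprD addrACA.
  by apply: (proj2 hL).
move=> x; have [Kg Lg] := gP (f x).
have : f x - f (g (f x)) = 0.
  by apply: dL Lg; exists (x - g (f x)); rewrite (homB hf).
by move/eqP; rewrite subr_eq0 => /eqP.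
Qed.

Lemma proj_exists V (P Q : V -> Prop) : submod P -> submod Q ->
  (forall x, P x -> Q x -> x = 0) -> (forall x, exists y z, P y /\ Q z /\ x = y + z) ->
  exists e : V -> V, Defs.hom e /\ forall x, Q (e x) /\ P (x - e x) /\ (Q x -> e x = x).
Proof.
move=> hP hQ dis sp.
have EX x : exists k, Q k /\ P (x - k).
  by have [y [z [Py [Qz ->]]]] := sp x; exists z; rewrite addrK.
have uniq x k k' : Q k -> P (x - k) -> Q k' -> P (x - k') -> k = k'.
  move=> Qk Pk Qk' Pk'.
  have Pkk : P (k - k').
    by have := submodB hP Pk' Pk; rewrite opprB addrC addrA subrK.
  by apply/eqP; rewrite -subr_eq0; apply/eqP; apply: dis Pkk (submodB hQ Qk Qk').
pose e x := proj1_sig (constructive_indefinite_description _ (EX x)).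
have eP x : Q (e x) /\ P (x - e x) by rewrite /e; case: constructive_indefinite_description.
exists e; split.
  move=> a x y; have [Kx Lx] := eP x; have [Ky Ly] := eP y.
  have [Kxy Lxy] := eP (a *: x + y).
  apply: (uniq (a *: x + y)) => //.
    by apply: (proj2 hQ).
  have -> : a *: x + y - (a *: e x + e y) = a *: (x - e x) + (y - e y).
    by rewrite scalerBr opprD addrACA.
  by apply: (proj2 hP).
move=> x; have [Qe Pe] := eP x; split=> //; split=> // Qx.
by apply: (uniq x) => //; rewrite subrr; exact: hP.1.
Qed.

Section Main.
Variable M : lmodType S.

Definition iota1 (m : M) : dpow M 1 := [ffun _ : 'I_1 => m].
Definition pi1 (x : dpow M 1) : M := (x : {ffun 'I_1 -> M}) ord0.
Lemma hiota1 : Defs.hom iota1.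
Proof. by move=> a x y; apply/ffunP=> i; rewrite !ffunE. Qed.
Lemma hpi1 : Defs.hom pi1.
Proof. by move=> a x y; rewrite /pi1 !ffunE. Qed.
Lemma pi1K m : pi1 (iota1 m) = m.
Proof. by rewrite /pi1 ffunE. Qed.
Lemma iota1K x : iota1 (pi1 x) = x.
Proof. by apply/ffunP=> i; rewrite ffunE /pi1 (ord1 i). Qed.
Lemma pi1_inj x y : pi1 x = pi1 y -> x = y.
Proof. by move=> e; rewrite -(iota1K x) -(iota1K y) e. Qed.

Lemma endoreg_transport : endoregular (dpow M 1) -> endoregular M.
Proof.
move=> R f hf.
have hiota := hiota1; have hpi := hpi1.
have [G [hG eG]] := R (fun x => iota1 (f (pi1 x))) ltac:(homt).
exists (fun m => pi1 (G (iota1 m))); split; first by homt.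
move=> m; have := eG (iota1 m); rewrite !pi1K => /(congr1 pi1); rewrite !pi1K.
by [].
Qed.

Lemma b_to_a : rickart (dpow M 1) -> inF M M -> endoregular M.
Proof.
move=> Ri IF; apply: endoreg_transport => F hF.
have hiota := hiota1; have hpi := hpi1.
have [hker [Q [hQ [dis sp]]]] := Ri F hF.
have [e [he eP]] := proj_exists hker hQ dis sp.
have [N [v [hv [vinj vQ]]]] := subK_exists hQ.
have EX x : exists n, e x = v n by apply/vQ; case: (eP x).
pose phi x := proj1_sig (constructive_indefinite_description _ (EX x)).
have phiP x : e x = v (phi x) by rewrite /phi; case: constructive_indefinite_description.
have hphi : Defs.hom phi.
  move=> a x y; apply: vinj; rewrite hv -!phiP; exact: he.
have hal : Defs.hom (fun n => pi1 (F (v n))) by homt.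
have hbe : Defs.hom (fun n => pi1 (v n)) by homt.
have fg : fin_gen M N.
  exists 1%N; split=> //; exists phi; split=> // n.
  exists (v n); apply: vinj; rewrite -phiP.
  by have [_ [_ ->]] := eP (v n); [|apply/vQ; exists n].
have alinj a b : pi1 (F (v a)) = pi1 (F (v b)) -> a = b.
  move=> /pi1_inj eF; apply: vinj; apply/eqP; rewrite -subr_eq0; apply/eqP.
  apply: dis; first by rewrite (homB hF) eF subrr.
  by apply: (submodB hQ); apply/vQ; [exists a | exists b].
have [ga [hga ega]] := IF N _ _ fg hal alinj hbe.
exists (fun y => iota1 (ga (pi1 y))); split; first by homt.
move=> x.
have Fx : F x = F (e x).
  by apply/eqP; rewrite -subr_eq0 -(homB hF); apply/eqP; case: (eP x) => _ [].
by rewrite Fx phiP -ega iota1K.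
Qed.

Lemma main_gen :
  (endoregular M <-> (fin_sigma_rickart M /\ inF M M)) /\
  (endoregular M <->
     ((forall n : nat, (0 < n)%N -> D2 (dpow M n)) /\
      (forall n : nat, (0 < n)%N -> forall P : dpow M n -> Prop,
          fin_gen_sub M P -> dsummand P))).
Proof.
have RD : endoregular M -> forall k n, Reg (dpow M k) (dpow M n) by move=> E; exact: Reg_dpow.
split; split.
- move=> E; split.
    move=> n _ f hf; have [g [hg eg]] := RD E n n f hf; exact: reg_ker hf hg eg.
  move=> N al be [k [_ [p [hp surj]]]] hal alinj hbe.
  have RF := @Reg_from_dpow M M E k.
  have [g [hg eg]] := RF (fun x => al (p x)) ltac:(homt).
  exists (fun m => be (p (g m))); split; first by homt.
  move=> n; have [x <-] := surj n.
  by congr be; apply: alinj; rewrite eg.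
- by move=> [FR IF]; apply: b_to_a => //; apply: FR.
- move=> E; split.
    move=> n _ Y hY [g [hg [kerY dsIm]]].
    have [g' [hg' eg]] := RD E n n g hg.
    exact: dsummand_ext kerY (reg_ker hg hg' eg).
  move=> n _ P [hP [k [_ [f [hf Pf]]]]].
  have [g [hg eg]] := RD E k n f hf.
  apply: dsummand_ext (reg_im hf hg eg).
  by move=> x; split=> /Pf.
move=> [c1 c2]; apply: endoreg_transport => F hF.
have dim : dsummand (fun y => exists x, y = F x).
  apply: (c2 1%N) => //; split; first exact: submod_im.
  by exists 1%N; split=> //; exists F.
have dker : dsummand (fun x => F x = 0).
  apply: (c1 1%N) => //; first exact: submod_ker.
  by exists F.
exact: summands_reg.
Qed.

End Main.

End Gen.

Theorem mainTheorem8 (R : nzRingType) (M : lmodType R^c) :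
  (endoregular M <-> (fin_sigma_rickart M /\ inF M M)) /\
  (endoregular M <->
     ((forall n : nat, (0 < n)%N -> D2 (dpow M n)) /\
      (forall n : nat, (0 < n)%N -> forall P : dpow M n -> Prop,
          fin_gen_sub M P -> dsummand P))).
Proof. exact: main_gen. Qed.
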